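(* Let $K$ be a field of characteristic $\neq2$ and $\tau=(1,-1,-1,-1)$. Then $\mathrm{Aut}\,A_\tau=G_5$, where $G_5=\{(\alpha_1x_1,\beta_2x_2)\mid \alpha_1,\beta_2\in K^*\}$ is the group of toric automorphisms of $K\langle x_1,x_2\rangle$.
   Context: $A=K\langle x_1,x_2\rangle$ is the free associative algebra with unit on $x_1,x_2$; $\varphi=(f_1,f_2)$ denotes the algebra endomorphism with $\varphi(x_1)=f_1$, $\varphi(x_2)=f_2$. For $q_{ij}\in K$, the diagonal braiding $\tau=(q_{11},q_{12},q_{21},q_{22})$ on $A$ is the linear map $A\otimes A\to A\otimes A$ given on words $u,v$ by $(u\otimes v)\tau=q_{11}^{s_1t_1}q_{12}^{s_1t_2}q_{21}^{s_2t_1}q_{22}^{s_2t_2}\,(v\otimes u)$, where $s_i$ (resp. $t_i$) is the number of occurrences of $x_i$ in $u$ (resp. $v$). $A_\tau$ is $A$ equipped with $\tau$, and $\mathrm{Aut}\,A_\tau$ is the group of algebra automorphisms $\varphi$ of $A$ satisfying $(\varphi\otimes\varphi)((w)\tau)=((\varphi\otimes\varphi)(w))\tau$ for all $w\in A\otimes A$, viewed as a subgroup of $\mathrm{Aut}\,K\langle x_1,x_2\rangle$. *)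

(* Defs.v *)
From HB Require Import structures.
From mathcomp Require Import all_boot all_order all_algebra.
Set Implicit Arguments. Unset Strict Implicit. Unset Printing Implicit Defensive.
Import GRing.Theory.
Local Open Scope ring_scope.

(* Free associative algebra K<x1,x2>, modelled by formal linear combinations
   of words.  A word is a sequence of letters in 'I_2 (letter 0 = x1,
   letter 1 = x2).  An element of A is represented by a finite list of
   (coefficient, word) pairs; two representatives denote the same element
   iff all their coefficients agree (relation [nc_eq]). *)

Definition word := seq 'I_2.

Section FreeAlg.
Variable K : fieldType.

Definition nc := seq (K * word).

Definition nc_coef (p : nc) (w : word) : K :=
  \sum_(t <- p | t.2 == w) t.1.

Definition nc_eq (p q : nc) : Prop := forall w, nc_coef p w = nc_coef q w.

Definition nc_one : nc := [:: (1, [::])].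
Definition nc_var (i : 'I_2) : nc := [:: (1, [:: i])].
Definition nc_scale (c : K) (p : nc) : nc := [seq (c * t.1, t.2) | t <- p].
Definition nc_mul (p q : nc) : nc :=
  [seq (a.1 * b.1, a.2 ++ b.2) | a <- p, b <- q].

Definition endo_word (f : 'I_2 -> nc) (u : word) : nc :=
  foldr (fun i r => nc_mul (f i) r) nc_one u.

Definition endo (f : 'I_2 -> nc) (p : nc) : nc :=
  flatten [seq nc_scale t.1 (endo_word f t.2) | t <- p].

Definition is_aut (f : 'I_2 -> nc) : Prop :=
  (forall p q, nc_eq (endo f p) (endo f q) -> nc_eq p q) /\
  (forall q, exists p, nc_eq (endo f p) q).

(* A (x) A, with basis u (x) v for words u, v. *)
Definition tens := seq (K * (word * word)).

Definition tens_coef (p : tens) (w : word * word) : K :=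
  \sum_(t <- p | t.2 == w) t.1.

Definition tens_eq (p q : tens) : Prop :=
  forall w, tens_coef p w = tens_coef q w.

Definition endo_tens (f : 'I_2 -> nc) (p : tens) : tens :=
  flatten [seq [seq (t.1 * a.1 * b.1, (a.2, b.2))
               | a <- endo_word f t.2.1, b <- endo_word f t.2.2] | t <- p].

(* diagonal braiding tau given by q : 'I_2 -> 'I_2 -> K (q i j = q_{i+1,j+1}) *)
Definition braid_coef (q : 'I_2 -> 'I_2 -> K) (u v : word) : K :=
  \prod_(i < 2) \prod_(j < 2) q i j ^+ (count_mem i u * count_mem j v).

Definition braid (q : 'I_2 -> 'I_2 -> K) (p : tens) : tens :=
  [seq (t.1 * braid_coef q t.2.1 t.2.2, (t.2.2, t.2.1)) | t <- p].

Definition in_Aut_braided (q : 'I_2 -> 'I_2 -> K) (f : 'I_2 -> nc) : Prop :=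
  is_aut f /\
  forall w : tens, tens_eq (endo_tens f (braid q w)) (braid q (endo_tens f w)).

Definition tau_lemma9 : 'I_2 -> 'I_2 -> K :=
  fun i j => if (val i == 0%N) && (val j == 0%N) then 1 else -1.

Definition in_G5 (f : 'I_2 -> nc) : Prop :=
  exists alpha beta : K, alpha != 0 /\ beta != 0 /\
    nc_eq (f ord0) (nc_scale alpha (nc_var ord0)) /\
    nc_eq (f ord_max) (nc_scale beta (nc_var ord_max)).

End FreeAlg.

(* Main.v *)
Require Import Defs.
From mathcomp Require Import all_boot all_order all_algebra.
From mathcomp Require Import ring zify.
Set Implicit Arguments. Unset Strict Implicit. Unset Printing Implicit Defensive.
Import GRing.Theory.
Local Open Scope ring_scope.

Lemma sum_pick (K : fieldType) (T : eqType) (r : seq T) (j : T) (G : T -> K) :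
  j \in r -> uniq r -> \sum_(i <- r) (if i == j then G i else 0) = G j.
Proof.
move=> jr ur; rewrite (bigD1_seq j) //= eqxx big1 ?addr0 // => i /negbTE -> //.
Qed.

Lemma regroup (K : fieldType) (T : eqType) (p : seq (K * T)) (F : T -> K) :
  \sum_(t <- p) t.1 * F t.2 =
  \sum_(u <- undup (map snd p)) (\sum_(t <- p | t.2 == u) t.1) * F u.
Proof.
under [RHS]eq_bigr => u _ do rewrite mulr_suml big_mkcond.
rewrite [RHS]exchange_big /= [LHS]big_seq [RHS]big_seq; apply: eq_bigr => t tp.
rewrite -(@sum_pick K T (undup (map snd p)) t.2 (fun u => t.1 * F u)); last exact: undup_uniq.
  by apply: eq_bigr => u _; rewrite eq_sym; case: eqP => // ->.
by rewrite mem_undup; apply: map_f.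
Qed.

Lemma cat_eqE (u v M : word) :
  (u ++ v == M) = (u == take (size u) M) && (v == drop (size u) M).
Proof.
apply/eqP/andP => [<-|[/eqP hu /eqP hv]]; last by rewrite hv {1}hu cat_take_drop.
by rewrite take_size_cat // drop_size_cat.
Qed.

Lemma coef_mul (K : fieldType) (p q : nc K) (M : word) :
  nc_coef (nc_mul p q) M =
  \sum_(u <- undup (map snd p)) nc_coef p u *
     (if u == take (size u) M then nc_coef q (drop (size u) M) else 0).
Proof.
rewrite /nc_coef /nc_mul big_flatten big_map.
rewrite -(regroup p (fun u => if u == take (size u) M then
      \sum_(t <- q | t.2 == drop (size u) M) t.1 else 0)).
apply: eq_bigr => a _; rewrite big_map /= .
case: ifP => ha.
  rewrite mulr_sumr big_mkcond [RHS]big_mkcond; apply: eq_bigr => b _ /=.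
  by rewrite cat_eqE ha /=; case: ifP.
by rewrite big1 ?mulr0 // => b; rewrite cat_eqE ha.
Qed.

Local Close Scope ring_scope.

Local Open Scope ring_scope.

Lemma coef_one (K : fieldType) M : nc_coef (nc_one K) M = if M == [::] then 1 else 0.
Proof. by rewrite /nc_coef /nc_one big_cons big_nil /= addr0 eq_sym. Qed.

Lemma coef_var (K : fieldType) i M : nc_coef (nc_var K i) M = if M == [:: i] then 1 else 0.
Proof. by rewrite /nc_coef /nc_var big_cons big_nil /= addr0 eq_sym. Qed.

Lemma coef_scale (K : fieldType) c (p : nc K) M : nc_coef (nc_scale c p) M = c * nc_coef p M.
Proof.
rewrite /nc_coef /nc_scale big_map mulr_sumr big_mkcond [RHS]big_mkcond.
by apply: eq_bigr => t _ /=; case: ifP; rewrite ?mulr0.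
Qed.

Lemma coef_mem (K : fieldType) (p : nc K) M : nc_coef p M != 0 -> M \in map snd p.
Proof.
apply: contraR => hM; rewrite /nc_coef big1_seq // => t /andP [/eqP ht tp].
by move: hM; rewrite -ht map_f.
Qed.

Lemma coef_endo (K : fieldType) f (p : nc K) M :
  nc_coef (endo f p) M = \sum_(t <- p) t.1 * nc_coef (endo_word f t.2) M.
Proof.
rewrite /nc_coef /endo big_flatten big_map; apply: eq_bigr => t _.
exact: coef_scale.
Qed.

Lemma coef_endo2 (K : fieldType) f (p : nc K) M :
  nc_coef (endo f p) M = \sum_(u <- undup (map snd p)) nc_coef p u * nc_coef (endo_word f u) M.
Proof. by rewrite coef_endo (regroup p (fun u => nc_coef (endo_word f u) M)). Qed.

Lemma endo_word1 (K : fieldType) f i M : nc_coef (endo_word f [:: i]) M = nc_coef (f i : nc K) M.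
Proof.
rewrite /nc_coef /= /nc_mul /nc_one big_flatten big_map [RHS]big_mkcond.
by apply: eq_bigr => a _; rewrite big_cons big_nil /= cats0 mulr1 addr0.
Qed.

Lemma tcoef_endo (K : fieldType) f (X : tens K) M N :
  tens_coef (endo_tens f X) (M, N) = \sum_(t <- X) t.1 *
     nc_coef (endo_word f t.2.1) M * nc_coef (endo_word f t.2.2) N.
Proof.
rewrite /tens_coef /endo_tens big_flatten big_map; apply: eq_bigr => t _.
rewrite big_flatten big_map /nc_coef -mulrA mulr_suml mulr_sumr.
rewrite [RHS]big_mkcond; apply: eq_bigr => a _.
rewrite big_map; case ha: (a.2 == M).
  rewrite mulrA mulr_sumr big_mkcond [RHS]big_mkcond; apply: eq_bigr => b _ /=.
  by rewrite xpair_eqE ha /=; case: (b.2 == N); rewrite ?mulrA.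
by rewrite big1 // => b; rewrite xpair_eqE ha.
Qed.

Lemma tcoef_braid (K : fieldType) q (X : tens K) M N :
  tens_coef (braid q X) (M, N) = braid_coef q N M * tens_coef X (N, M).
Proof.
rewrite /tens_coef /braid big_map mulr_sumr big_mkcond [RHS]big_mkcond.
apply: eq_bigr => [[c [u v]]] _ /=; rewrite !xpair_eqE andbC.
by case: ifP => [/andP [/eqP -> /eqP ->]|]; rewrite ?mulr0 // mulrC.
Qed.

Local Close Scope ring_scope.


Lemma I2_cases (x : 'I_2) : x = ord0 \/ x = ord_max.
Proof. by case: x => [[|[|]]] // H; [left|right]; apply: val_inj. Qed.

Fixpoint wkey (w : word) : nat :=
  if w is x :: w' then (nat_of_ord x).+1 * 3 ^ size w' + wkey w' else 0.

Lemma wkey_lt w : wkey w < 3 ^ size w.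
Proof.
elim: w => [|x w IH] //=; rewrite expnS.
have : (nat_of_ord x).+1 <= 2 by case: x => [[|[|]]].
nia.
Qed.

Lemma wkey_ge w : 3 ^ size w <= (wkey w).*2.+1.
Proof.
elim: w => [|x w IH] //=; rewrite expnS.
have : 1 <= (nat_of_ord x).+1 by [].
nia.
Qed.

Lemma wkey_cat u v : wkey (u ++ v) = wkey u * 3 ^ size v + wkey v.
Proof.
elim: u => [|x u IH] //=; rewrite IH size_cat expnD; lia.
Qed.

Lemma wkey_size u v : wkey u <= wkey v -> size u <= size v.
Proof.
move=> h; rewrite leqNgt; apply/negP => hs.
have h1 := wkey_lt v; have h2 := wkey_ge u.
have h3 : 3 ^ (size v).+1 <= 3 ^ size u by rewrite leq_exp2l.
rewrite expnS in h3; nia.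
Qed.

Lemma wkey_inj u v : wkey u = wkey v -> u = v.
Proof.
move=> h; have hs : size u = size v.
  by apply/eqP; rewrite eqn_leq !wkey_size // h.
elim: u v hs h => [|x u IH] [|y v] //= [hs] h.
have hu := wkey_lt u; have hv := wkey_lt v.
have exy : nat_of_ord x = nat_of_ord y.
  rewrite hs in h hu; move: h; set P := 3 ^ size v.
  have : (nat_of_ord x < nat_of_ord y) \/ (nat_of_ord x = nat_of_ord y) \/ (nat_of_ord y < nat_of_ord x) by lia.
  case=> [lt|[//|lt]] h; exfalso; nia.
have -> : x = y by apply: val_inj.
by rewrite (IH v hs) //; move: h; rewrite exy hs; lia.
Qed.

Lemma wkey_cat_le u u' v v' : wkey u <= wkey u' -> wkey v <= wkey v' ->
  wkey (u ++ v) <= wkey (u' ++ v').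
Proof.
move=> h1 h2; rewrite !wkey_cat.
have : 3 ^ size v <= 3 ^ size v' by rewrite leq_exp2l // wkey_size.
nia.
Qed.

Lemma wkey_cat_eq u u' v v' : wkey u <= wkey u' -> wkey v <= wkey v' ->
  wkey (u ++ v) = wkey (u' ++ v') -> u = u' /\ v = v'.
Proof.
move=> h1 h2; rewrite !wkey_cat => h.
have hP : 3 ^ size v <= 3 ^ size v' by rewrite leq_exp2l // wkey_size.
have hv := wkey_lt v.
have e1 : wkey u = wkey u'.
  apply/eqP; rewrite eqn_leq h1 /=; rewrite leqNgt; apply/negP => lt.
  move: h; nia.
split; first exact: wkey_inj.
apply: wkey_inj; rewrite e1 in h.
apply/eqP; rewrite eqn_leq h2 /=; rewrite leqNgt; apply/negP => lt.
move: h; nia.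
Qed.


Fixpoint wsub (a b : word) (w : word) : word :=
  if w is x :: w' then (if x == ord0 then a else b) ++ wsub a b w' else [::].

Lemma sub_cat a b u v : wsub a b (u ++ v) = wsub a b u ++ wsub a b v.
Proof. by elim: u => [|x u IH] //=; rewrite IH catA. Qed.

Definition c0 (w : word) := count_mem (ord0 : 'I_2) w.
Definition c1 (w : word) := count_mem (ord_max : 'I_2) w.

Lemma catI (s t1 t2 : word) : s ++ t1 = s ++ t2 -> t1 = t2.
Proof. by move/eqP; rewrite eqseq_cat // eqxx => /eqP. Qed.

Definition rho := wsub [:: ord0] [:: ord0; ord_max].
Definition rho' := wsub [:: ord_max; ord0] [:: ord_max].

Lemma sub0 a b w : wsub a b (ord0 :: w) = a ++ wsub a b w. Proof. by []. Qed.
Lemma sub1 a b w : wsub a b (ord_max :: w) = b ++ wsub a b w. Proof. by []. Qed.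

Ltac vclose := move/(congr1 (map (@nat_of_ord 2))); rewrite /= => -[].

Lemma rho_inj w w' : rho w = rho w' -> w = w'.
Proof.
rewrite /rho; elim: w w' => [|x w IH] [|y w'] //.
- by case: (I2_cases y) => ->; rewrite ?sub0 ?sub1.
- by case: (I2_cases x) => ->; rewrite ?sub0 ?sub1.
case: (I2_cases x) => ->; case: (I2_cases y) => ->; rewrite ?sub0 ?sub1 /=.
- by move=> [/IH ->].
- clear IH; case: w => [|z w]; first by vclose.
  by case: (I2_cases z) => ->; rewrite ?sub0 ?sub1; vclose.
- clear IH; case: w' => [|z w']; first by vclose.
  by case: (I2_cases z) => ->; rewrite ?sub0 ?sub1; vclose.
- by move=> [/IH ->].
Qed.

Lemma rho'_inj w w' : rho' w = rho' w' -> w = w'.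
Proof.
rewrite /rho'; elim: w w' => [|x w IH] [|y w'] //.
- by case: (I2_cases y) => ->; rewrite ?sub0 ?sub1.
- by case: (I2_cases x) => ->; rewrite ?sub0 ?sub1.
case: (I2_cases x) => ->; case: (I2_cases y) => ->; rewrite ?sub0 ?sub1 /=.
- by move=> [/IH ->].
- clear IH; case: w' => [|z w']; first by vclose.
  by case: (I2_cases z) => ->; rewrite ?sub0 ?sub1; vclose.
- clear IH; case: w => [|z w]; first by vclose.
  by case: (I2_cases z) => ->; rewrite ?sub0 ?sub1; vclose.
- by move=> [/IH ->].
Qed.

Lemma sub_rho a c w : wsub a (a ++ c) w = wsub a c (rho w).
Proof.
rewrite /rho; elim: w => [|x w IH] //.
case: (I2_cases x) => ->.
  by rewrite !sub0 IH.
by rewrite sub1 IH sub1 !cat_cons sub0 sub1 cat0s -catA.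
Qed.

Lemma sub_rho' b c w : wsub (b ++ c) b w = wsub c b (rho' w).
Proof.
rewrite /rho'; elim: w => [|x w IH] //.
case: (I2_cases x) => ->.
  by rewrite !sub0 IH !cat_cons sub1 sub0 cat0s -catA.
by rewrite !sub1 IH.
Qed.

Lemma code n : forall a b : word, size a + size b <= n ->
  c0 a * c1 b != c1 a * c0 b -> forall w w', wsub a b w = wsub a b w' -> w = w'.
Proof.
elim: n => [|n IHn] a b hn hdet.
  by move: hn hdet; case: a => // _; rewrite /c0 /c1 /= !mul0n.
have ha : a != [::] by apply: contraNneq hdet => ->.
have hb : b != [::] by apply: contraNneq hdet => ->; rewrite /c0 /c1 /= !muln0.
have key : forall w1 w1', wsub a b (ord0 :: w1) = wsub a b (ord_max :: w1') -> False.
  move=> w1 w1' /= heq.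
  have [hab|hab] := leqP (size a) (size b).
  - have ta : take (size a) b = a.
      move: (congr1 (take (size a)) heq); rewrite take_size_cat // take_cat.
      case: ltnP => h e; first by rewrite [RHS]e.
      have hs : size a = size b by apply/eqP; rewrite eqn_leq hab h.
      by rewrite [RHS]e hs subnn take0 cats0 take_oversize.
    set c := drop (size a) b.
    have ebc : b = a ++ c by rewrite -{1}ta cat_take_drop.
    have hc : c != [::].
      apply: contraNneq hdet => hc0; rewrite ebc hc0 cats0; by rewrite mulnC.
    have : (ord0 :: w1) = (ord_max :: w1').
      apply: rho_inj; apply: (IHn a c).
      - move: hn; rewrite ebc size_cat; case: (a) ha => //= ? ? _; lia.
      - move: hdet; rewrite ebc /c0 /c1 !count_cat !mulnDr.
        by apply: contra => /eqP ->; apply/eqP; lia.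
      by rewrite -!sub_rho -ebc.
    by case.
  - have tb : take (size b) a = b.
      by move: (congr1 (take (size b)) heq); rewrite [RHS]take_size_cat // take_cat hab.

    set c := drop (size b) a.
    have eac : a = b ++ c by rewrite -{1}tb cat_take_drop.
    have : (ord0 :: w1) = (ord_max :: w1').
      apply: rho'_inj; apply: (IHn c b).
      - move: hn; rewrite eac size_cat; case: (b) hb => //= ? ? _; lia.
      - move: hdet; rewrite eac /c0 /c1 !count_cat !mulnDl.
        by apply: contra => /eqP ->; apply/eqP; lia.
      by rewrite -!sub_rho' -eac.
    by case.
have sa : 0 < size a by rewrite lt0n size_eq0.
have sb : 0 < size b by rewrite lt0n size_eq0.
elim=> [|x w IH] [|y w'] //.
- by case: (I2_cases y) => ->; rewrite ?sub0 ?sub1 => /(congr1 size) /=; rewrite size_cat; lia.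
- by case: (I2_cases x) => ->; rewrite ?sub0 ?sub1 => /(congr1 size) /=; rewrite size_cat; lia.
case: (I2_cases x) => ->; case: (I2_cases y) => ->; rewrite ?sub0 ?sub1.
- by move/catI/IH => ->.
- by move=> h; exfalso; apply: (key w w').
- by move=> h; exfalso; apply: (key w' w); rewrite sub0 sub1 h.
- by move/catI/IH => ->.
Qed.

Local Open Scope ring_scope.

Lemma sum_nz (K : fieldType) (T : eqType) (r : seq T) (F : T -> K) :
  \sum_(i <- r) F i != 0 -> exists2 i, i \in r & F i != 0.
Proof.
elim: r => [|x r IH]; first by rewrite big_nil eqxx.
rewrite big_cons; case: (F x =P 0) => [->|/eqP h _]; last by exists x; rewrite ?mem_head.
by rewrite add0r => /IH [i ir hi]; exists i; rewrite ?inE ?ir ?orbT.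
Qed.

Lemma exists_max (T : eqType) (s : seq T) (g : T -> nat) : s != [::] ->
  exists2 x, x \in s & forall y, y \in s -> (g y <= g x)%N.
Proof.
elim: s => [|x s IH] // _.
case: (eqVneq s [::]) => [->|/IH [z zs hz]].
  by exists x; rewrite ?mem_head // => y; rewrite inE => /eqP ->.
case: (leqP (g x) (g z)) => h.
  exists z; first by rewrite inE zs orbT.
  by move=> y; rewrite inE => /orP [/eqP ->|/hz].
exists x; first exact: mem_head.
move=> y; rewrite inE => /orP [/eqP ->//|/hz h2]; exact: leq_trans h2 (ltnW h).
Qed.

Lemma Lsel (L : 'I_2 -> word) x : (if x == ord0 then L ord0 else L ord_max) = L x.
Proof. by case: (I2_cases x) => ->. Qed.

Definition sigL (L : 'I_2 -> word) := wsub (L ord0) (L ord_max).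

Lemma sig_cons L x w : sigL L (x :: w) = L x ++ sigL L w.
Proof. by rewrite /sigL /= Lsel. Qed.

Lemma lead_lemma (K : fieldType) (f : 'I_2 -> nc K) (L : 'I_2 -> word)
  (hL : forall x, nc_coef (f x) (L x) != 0)
  (hmax : forall x u, nc_coef (f x) u != 0 -> (wkey u <= wkey (L x))%N) w :
  (forall M, nc_coef (endo_word f w) M != 0 -> (wkey M <= wkey (sigL L w))%N) /\
  nc_coef (endo_word f w) (sigL L w) != 0.
Proof.
elim: w => [|x w [IH1 IH2]].
  split; last by rewrite coef_one eqxx oner_eq0.
  by move=> M; rewrite coef_one; case: (M =P [::]) => [->|_]; rewrite ?eqxx.
have E : endo_word f (x :: w) = nc_mul (f x) (endo_word f w) by [].
rewrite E sig_cons; split.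
  move=> M; rewrite coef_mul => /sum_nz [u _]; case: ifP => hu; last by rewrite mulr0 eqxx.
  rewrite mulf_eq0 negb_or => /andP [hcu /IH1 hd].
  rewrite -(cat_take_drop (size u) M) -(eqP hu).
  exact: wkey_cat_le (hmax _ _ hcu) hd.
rewrite coef_mul (bigD1_seq (L x)) /=; first last.
- exact: undup_uniq.
- by rewrite mem_undup; apply: coef_mem.
rewrite take_size_cat // drop_size_cat // eqxx big1_seq ?addr0.
  by rewrite mulf_neq0.
move=> u /andP [hne _]; apply/eqP; apply: contraR hne => hnz.
move: hnz; case: ifP => hu; last by rewrite mulr0 eqxx.
rewrite mulf_eq0 negb_or => /andP [hcu hd].
have hd' := IH1 _ hd.
have := wkey_cat_eq (hmax _ _ hcu) hd'.
by rewrite {1}(eqP hu) cat_take_drop => /(_ erefl) [-> _].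
Qed.

Lemma image_lead (K : fieldType) (f : 'I_2 -> nc K) (L : 'I_2 -> word)
  (hL : forall x, nc_coef (f x) (L x) != 0)
  (hmax : forall x u, nc_coef (f x) u != 0 -> (wkey u <= wkey (L x))%N)
  (hcode : forall w w', sigL L w = sigL L w' -> w = w') p i :
  nc_eq (endo f p) (nc_var K i) -> exists w, sigL L w = [:: i].
Proof.
move=> heq.
set S := [seq u <- undup (map snd p) | nc_coef p u != 0].
have hS : S != [::].
  apply/eqP => hS0; have := heq [:: i].
  rewrite coef_var eqxx coef_endo2 big1_seq; first by move/esym/eqP; rewrite oner_eq0.
  move=> u /andP [_ uU]; suff -> : nc_coef p u = 0 by rewrite mul0r.
  apply/eqP; apply: contraT => hu.
  have : u \in S by rewrite mem_filter hu.
  by rewrite hS0.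
have [ws wsS hws] := exists_max (fun u => wkey (sigL L u)) hS.
exists ws.
have wsU : ws \in undup (map snd p) by move: wsS; rewrite mem_filter => /andP [].
have hcw : nc_coef p ws != 0 by move: wsS; rewrite mem_filter => /andP [].
have hc : nc_coef (endo f p) (sigL L ws) != 0.
  rewrite coef_endo2 (bigD1_seq ws) //=; last exact: undup_uniq.
  rewrite big1_seq ?addr0; first by rewrite mulf_neq0 // (lead_lemma hL hmax ws).2.
  move=> u /andP [hne uU]; apply/eqP; apply: contraR hne => hnz.
  move: hnz; rewrite mulf_eq0 negb_or => /andP [hcp hce].
  have uS : u \in S by rewrite mem_filter hcp.
  have h1 := (lead_lemma hL hmax u).1 _ hce; have h2 := hws u uS.
  apply/eqP; apply: hcode; apply: wkey_inj; apply/eqP; rewrite eqn_leq h2.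
  exact: h1.
move: hc; rewrite heq coef_var; case: (sigL L ws =P [:: i]) => //.
by rewrite eqxx.
Qed.

Lemma sig_single (L : 'I_2 -> word) w i : (forall x, L x != [::]) ->
  sigL L w = [:: i] -> exists x, L x = [:: i].
Proof.
move=> hne; case: w => [|x w] //; rewrite sig_cons => h.
exists x; move: (hne x) h; case: (L x) => [|a l] // _ /=.
by case: l => [|b l] //= [-> ]; case: (sigL L w).
Qed.

Local Close Scope ring_scope.

Local Open Scope ring_scope.

Lemma m1_neq1 (K : fieldType) : ~~ (2%N \in [pchar K]%R) -> (-1 : K) != 1.
Proof.
move=> h; apply: contra h => /eqP e.
rewrite inE /=.
have H : (2%:R : K) = 0 by rewrite -[2%N]/(1+1)%N natrD -{1}e addNr.
by apply/eqP.
Qed.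

Lemma m1exp (K : fieldType) n : (-1 : K) ^+ n = if odd n then -1 else 1.
Proof.
elim: n => [|n IH]; first by rewrite expr0.
by rewrite exprS IH /=; case: (odd n); rewrite ?mulN1r ?opprK ?mulr1.
Qed.

Lemma bc_tau (K : fieldType) u v :
  braid_coef (tau_lemma9 K) u v =
  if odd (c0 u * c1 v + c1 u * c0 v + c1 u * c1 v) then -1 else 1.
Proof.
rewrite /braid_coef !big_ord_recl !big_ord0 /tau_lemma9 /= !mulr1.
have -> : lift ord0 ord0 = ord_max :> 'I_2 by apply: val_inj.
rewrite /c0 /c1 expr1n mul1r -!exprD -m1exp.
by congr (_ ^+ _); rewrite addnA.
Qed.

Lemma braid_rel (K : fieldType) (f : 'I_2 -> nc K)
  (hbr : forall w, tens_eq (endo_tens f (braid (tau_lemma9 K) w))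
                          (braid (tau_lemma9 K) (endo_tens f w))) i j u v :
  nc_coef (f i) u != 0 -> nc_coef (f j) v != 0 ->
  braid_coef (tau_lemma9 K) [:: i] [:: j] = braid_coef (tau_lemma9 K) u v.
Proof.
move=> hu hv; have := hbr [:: (1, ([:: i], [:: j]))] (v, u).
rewrite tcoef_endo tcoef_braid tcoef_endo /braid /= !big_cons !big_nil /= !addr0.
rewrite !endo_word1 !mul1r -mulrA [X in _ * X = _]mulrC.
exact: (mulIf (mulf_neq0 hu hv)).
Qed.

Lemma c0_0 : c0 [:: ord0] = 1%N. Proof. by []. Qed.
Lemma c1_0 : c1 [:: ord0] = 0%N. Proof. by []. Qed.
Lemma c0_1 : c0 [:: ord_max] = 0%N. Proof. by []. Qed.
Lemma c1_1 : c1 [:: ord_max] = 1%N. Proof. by []. Qed.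

Lemma parities (K : fieldType) (hchar : ~~ (2%N \in [pchar K]%R)) (f : 'I_2 -> nc K)
  (hbr : forall w, tens_eq (endo_tens f (braid (tau_lemma9 K) w))
                          (braid (tau_lemma9 K) (endo_tens f w))) :
  (forall u, nc_coef (f ord0) u != 0 -> ~~ odd (c1 u)) /\
  (forall v, nc_coef (f ord_max) v != 0 -> odd (c1 v)) /\
  (forall u v, nc_coef (f ord0) u != 0 -> nc_coef (f ord_max) v != 0 -> odd (c0 u)).
Proof.
have hn := m1_neq1 hchar.
have hn' : (1 : K) != -1 by rewrite eq_sym.
have P1 : forall u, nc_coef (f ord0) u != 0 -> ~~ odd (c1 u).
  move=> u hu; have := braid_rel hbr hu hu.
  rewrite !bc_tau c0_0 c1_0 /=.
  have -> : (c0 u * c1 u + c1 u * c0 u + c1 u * c1 u)%N = (c1 u * c1 u + (c0 u * c1 u).*2)%N.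
    by rewrite -addnn mulnC; lia.
  by rewrite oddD odd_double addbF oddM andbb; case: (odd (c1 u)) => // /eqP; rewrite (negbTE hn').
have P2 : forall v, nc_coef (f ord_max) v != 0 -> odd (c1 v).
  move=> v hv; have := braid_rel hbr hv hv.
  rewrite !bc_tau c0_1 c1_1 /=.
  have -> : (c0 v * c1 v + c1 v * c0 v + c1 v * c1 v)%N = (c1 v * c1 v + (c0 v * c1 v).*2)%N.
    by rewrite -addnn mulnC; lia.
  by rewrite oddD odd_double addbF oddM andbb; case: (odd (c1 v)) => // /eqP; rewrite (negbTE hn).
split => //; split => // u v hu hv; have := braid_rel hbr hu hv.
rewrite !bc_tau c0_0 c1_1 c1_0 /= !oddD !oddM (negbTE (P1 u hu)) (P2 v hv) /= andbT !addbF.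
by case: (odd (c0 u)) => // /eqP; rewrite (negbTE hn).
Qed.


Local Close Scope ring_scope.

Local Open Scope ring_scope.

Lemma wkey_le2 u : (wkey u <= 2)%N -> [\/ u = [::], u = [:: ord0] | u = [:: ord_max]].
Proof.
case: u => [|x w] /=; first by constructor 1.
case: w => [|y w] /=.
  rewrite expn0 muln1 addn0 => _; case: (I2_cases x) => ->; [constructor 2|constructor 3] => //.
have := expn_gt0 3 (size w); rewrite expnS; nia.
Qed.

Lemma coef_single (K : fieldType) (c : K) u M : nc_coef [:: (c, u)] M = if M == u then c else 0.
Proof. by rewrite /nc_coef big_cons big_nil /= addr0 eq_sym. Qed.

Lemma forward (K : fieldType) (hchar : ~~ (2%N \in [pchar K]%R)) (f : 'I_2 -> nc K) :
  in_Aut_braided (tau_lemma9 K) f -> in_G5 f.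
Proof.
move=> [[hinj hsurj] hbr].
have [P1 [P2 P3]] := parities hchar hbr.
have hne : forall x, exists u, nc_coef (f x) u != 0.
  move=> x; case: (boolP (has (fun u => nc_coef (f x) u != 0) (map snd (f x)))).
    by move=> /hasP [u _ hu]; exists u.
  move=> hall; exfalso.
  have hz : forall u, nc_coef (f x) u = 0.
    move=> u; apply/eqP; apply: contraT => hu; move: hall; apply: contraR => _.
    by apply/hasP; exists u => //; apply: coef_mem.
  have := hinj [:: (1, [:: x])] [::].
  have H : nc_eq (endo f [:: (1, [:: x])]) (endo f [::]).
    by move=> M; rewrite !coef_endo big_cons !big_nil endo_word1 hz mulr0 addr0.
  move/(_ H [:: x]); rewrite coef_single eqxx /nc_coef big_nil => /eqP.
  by rewrite oner_eq0.
have lead : forall x, exists L, nc_coef (f x) L != 0 /\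
    forall u, nc_coef (f x) u != 0 -> (wkey u <= wkey L)%N.
  move=> x; have [u hu] := hne x.
  set S := [seq v <- undup (map snd (f x)) | nc_coef (f x) v != 0].
  have memS : forall v, nc_coef (f x) v != 0 -> v \in S.
    by move=> v hv; rewrite mem_filter hv mem_undup coef_mem.
  have hS : S != [::] by apply/eqP => h; have := memS u hu; rewrite h.
  have [L LS hL] := exists_max wkey hS.
  exists L; split; first by move: LS; rewrite mem_filter => /andP [].
  by move=> v /memS /hL.
have [L0 [hL0 hm0]] := lead ord0; have [L1 [hL1 hm1]] := lead ord_max.
pose L (x : 'I_2) := if x == ord0 then L0 else L1.
have LE0 : L ord0 = L0 by rewrite /L eqxx.
have LE1 : L ord_max = L1 by [].
have hL : forall x, nc_coef (f x) (L x) != 0.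
  by move=> x; case: (I2_cases x) => ->; rewrite ?LE0 ?LE1.
have hmax : forall x u, nc_coef (f x) u != 0 -> (wkey u <= wkey (L x))%N.
  by move=> x; case: (I2_cases x) => ->; rewrite ?LE0 ?LE1.
have oL0 : odd (c0 L0) := P3 L0 L1 hL0 hL1.
have eL0 : ~~ odd (c1 L0) := P1 L0 hL0.
have oL1 : odd (c1 L1) := P2 L1 hL1.
have hdet : (c0 (L ord0) * c1 (L ord_max) != c1 (L ord0) * c0 (L ord_max))%N.
  rewrite LE0 LE1; apply/eqP => e; have := congr1 odd e.
  by rewrite !oddM oL0 oL1 (negbTE eL0).
have hcode : forall w w', sigL L w = sigL L w' -> w = w'.
  exact: (code (leqnn (size (L ord0) + size (L ord_max))) hdet).
have Lne : forall x, L x != [::].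
  move=> x; case: (I2_cases x) => ->; rewrite ?LE0 ?LE1.
    by apply: contraTneq oL0 => ->.
  by apply: contraTneq oL1 => ->.
have eqL0 : L0 = [:: ord0].
  have [p hp] := hsurj (nc_var K ord0).
  have [w hw] := image_lead hL hmax hcode hp.
  have [x hx] := sig_single Lne hw.
  case: (I2_cases x) hx => ->; rewrite ?LE0 ?LE1 // => h.
  by move: oL1; rewrite h.
have eqL1 : L1 = [:: ord_max].
  have [p hp] := hsurj (nc_var K ord_max).
  have [w hw] := image_lead hL hmax hcode hp.
  have [x hx] := sig_single Lne hw.
  case: (I2_cases x) hx => ->; rewrite ?LE0 ?LE1 // => h.
  by move: oL0; rewrite h.
have F0 : forall u, nc_coef (f ord0) u != 0 -> u = [:: ord0].
  move=> u hu; have := hm0 u hu; rewrite eqL0 /= => /(leq_trans)/(_ (leqnSn 1)).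
  case/wkey_le2 => // hu0; first by move: (P3 u L1 hu hL1); rewrite hu0.
  by move: (P1 u hu); rewrite hu0.
have F1 : forall u, nc_coef (f ord_max) u != 0 -> u = [:: ord_max].
  move=> u hu; have := hm1 u hu; rewrite eqL1 /=.
  by case/wkey_le2 => // hu0; move: (P2 u hu); rewrite hu0.
exists (nc_coef (f ord0) [:: ord0]), (nc_coef (f ord_max) [:: ord_max]).
split; first by rewrite -eqL0.
split; first by rewrite -eqL1.
split.
  move=> M; rewrite coef_scale coef_var; case: (M =P [:: ord0]) => [->|hM]; first by rewrite mulr1.
  by rewrite mulr0; apply/eqP; apply: contraT => /F0.
move=> M; rewrite coef_scale coef_var; case: (M =P [:: ord_max]) => [->|hM]; first by rewrite mulr1.
by rewrite mulr0; apply/eqP; apply: contraT => /F1.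
Qed.

Local Close Scope ring_scope.

Local Open Scope ring_scope.

Lemma toric_word (K : fieldType) (f : 'I_2 -> nc K) (g : 'I_2 -> K)
  (hg : forall x, g x != 0)
  (hf : forall x M, nc_coef (f x) M = if M == [:: x] then g x else 0) w M :
  nc_coef (endo_word f w) M = if M == w then \prod_(x <- w) g x else 0.
Proof.
elim: w M => [|x w IH] M; first by rewrite coef_one big_nil.
have E : endo_word f (x :: w) = nc_mul (f x) (endo_word f w) by [].
rewrite E coef_mul.
have -> : \sum_(u <- undup (map snd (f x)))
    nc_coef (f x) u * (if u == take (size u) M then nc_coef (endo_word f w) (drop (size u) M) else 0)
  = \sum_(u <- undup (map snd (f x)))
    (if u == [:: x] then g x * (if u == take (size u) M then nc_coef (endo_word f w) (drop (size u) M) else 0) else 0).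
  by apply: eq_bigr => u _; rewrite hf; case: ifP; rewrite ?mul0r.
rewrite sum_pick; first last.
- exact: undup_uniq.
- by rewrite mem_undup; apply: coef_mem; rewrite hf eqxx.
rewrite big_cons; case: M => [|y M] /=.
  by rewrite mulr0.
rewrite take0 drop0 IH eqseq_cons.
case: (x =P y) => [->|hxy]; last first.
  rewrite /= mulr0 eqseq_cons (_ : (y == x) = false) //; apply/eqP => e; exact: hxy (esym e).
by rewrite /= eqseq_cons !eqxx /=; case: (M == w); rewrite ?mulr0.
Qed.

Lemma backward (K : fieldType) (f : 'I_2 -> nc K) :
  in_G5 f -> in_Aut_braided (tau_lemma9 K) f.
Proof.
move=> [a [b [ha [hb [h0 h1]]]]].
pose g (x : 'I_2) := if x == ord0 then a else b.
have hg : forall x, g x != 0 by move=> x; case: (I2_cases x) => ->.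
have hf : forall x M, nc_coef (f x) M = if M == [:: x] then g x else 0.
  move=> x M; case: (I2_cases x) => ->; rewrite ?h0 ?h1 coef_scale coef_var;
  by case: ifP; rewrite ?mulr1 ?mulr0.
pose cw (w : word) := \prod_(x <- w) g x.
have hcw : forall w, cw w != 0.
  by elim=> [|x w IH]; rewrite /cw ?big_nil ?oner_neq0 // big_cons mulf_neq0.
have hE : forall p M, nc_coef (endo f p) M = nc_coef p M * cw M.
  move=> p M; rewrite coef_endo /nc_coef mulr_suml [RHS]big_mkcond; apply: eq_bigr => t _ /=.
  rewrite -/(nc_coef _ M) (toric_word hg hf) eq_sym; case: ifP => [/eqP ->|]; by rewrite ?mulr0 ?mul0r.
have hT : forall X M N, tens_coef (endo_tens f X) (M, N) = tens_coef X (M, N) * cw M * cw N.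
  move=> X M N; rewrite tcoef_endo /tens_coef !mulr_suml [RHS]big_mkcond; apply: eq_bigr => [[c [u v]]] _ /=.
  rewrite !(toric_word hg hf) xpair_eqE (eq_sym M) (eq_sym N).
  case: (u =P M) => [->|]; case: (v =P N) => [->|] /=; by rewrite ?mulr0 ?mul0r.
split; [split|].
- move=> p q h M; apply: (mulIf (hcw M)); by rewrite -!hE h.
- move=> q; exists [seq (t.1 / cw t.2, t.2) | t <- q] => M; rewrite hE.
  rewrite /nc_coef big_map /= mulr_suml; apply: eq_bigr => t /eqP ->.
  by rewrite divfK.
- move=> X [M N]; rewrite hT !tcoef_braid hT.
  by rewrite -!mulrA; congr (_ * (_ * _)); rewrite mulrC.
Qed.

Theorem lemma9 (K : fieldType) (hchar : ~~ (2%N \in [pchar K]%R)) (f : 'I_2 -> nc K) :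
  in_Aut_braided (tau_lemma9 K) f <-> in_G5 f.
Proof. by split; [exact: forward | exact: backward]. Qed.

Local Close Scope ring_scope.
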